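(* Let $H$ be a complex separable Hilbert space and let $\mathcal{G}$ be a countably infinite abelian group of unitary operators on $H$. Let $X = \{x_1,\dots,x_r\}$ and $Y = \{y_1,\dots,y_s\}$ be finite subsets of $H$ with $r < s$, let $V_0 = \overline{\mathrm{span}}\, \mathcal{G}(X)$ and $V_1 = \overline{\mathrm{span}}\, \mathcal{G}(Y)$, and assume $V_0 \subset V_1$. Let $W_0$ be a closed linear subspace of $V_1$ such that $V_0 + W_0 = V_1$ and $V_0 \cap W_0 = \{0\}$. Suppose that $\mathcal{G}(X)$ and $\mathcal{G}(Y)$ are frames for $V_0$ and $V_1$ respectively. Then there exists a finite subset $\Gamma = \{z_1,\dots,z_p\}$ of $W_0$ (for some positive integer $p$, not necessarily equal to $s-r$) such that $\mathcal{G}(\Gamma)$ is a frame for $W_0$ if and only if $g(W_0) \subseteq W_0$ for every $g \in \mathcal{G}$.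
   Context: For a finite set $S=\{v_1,\dots,v_k\}\subset H$, $\mathcal{G}(S)$ denotes the indexed family $\{g v_j : g \in \mathcal{G},\ j=1,\dots,k\}$. A countable indexed family $\{v_n\}_{n\in J}$ is a frame for its closed linear span $V$ if there are constants $0<A\le B$ with $A\|f\|^2 \le \sum_n |\langle f, v_n\rangle|^2 \le B\|f\|^2$ for all $f \in V$. *)

(* Defs.v *)
From mathcomp Require Import all_boot all_order all_algebra.
From mathcomp Require Import all_classical all_reals all_analysis.
From mathcomp Require Import complex.
Set Implicit Arguments. Unset Strict Implicit. Unset Printing Implicit Defensive.
Import Order.TTheory GRing.Theory Num.Theory.
Local Open Scope ring_scope.
Local Open Scope classical_set_scope.

Section Hilbert.
Variable R : realType.
Variable H : lmodType R[i].
Variable ip : H -> H -> R[i].      (* inner product, linear in the 1st argument *)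

Definition cnorm2 (z : R[i]) : R := complex.Re z ^+ 2 + complex.Im z ^+ 2.

Definition hnorm (f : H) : R := Num.sqrt (complex.Re (ip f f)).

Definition is_inner_product : Prop :=
  [/\ (forall (a : R[i]) (x y z : H), ip (a *: x + y) z = a * ip x z + ip y z),
      (forall x y : H, ip y x = (ip x y)^*),
      (forall x : H, 0 <= ip x x) &
      (forall x : H, ip x x = 0 -> x = 0)].

Definition is_complete : Prop :=
  forall u : nat -> H,
    (forall e : R, 0 < e -> exists N : nat, forall m n : nat,
        (N <= m)%N -> (N <= n)%N -> hnorm (u m - u n) < e) ->
    exists l : H, forall e : R, 0 < e -> exists N : nat, forall n : nat,
        (N <= n)%N -> hnorm (u n - l) < e.

Definition is_separable : Prop :=
  exists d : nat -> H, forall (f : H) (e : R), 0 < e ->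
    exists n : nat, hnorm (f - d n) < e.

Definition separable_hilbert_space : Prop :=
  [/\ is_inner_product, is_complete & is_separable].

Definition span (S : set H) : set H :=
  [set f | exists (n : nat) (c : 'I_n -> R[i]) (v : 'I_n -> H),
     (forall k, S (v k)) /\ f = \sum_(k < n) c k *: v k].

Definition hclosure (S : set H) : set H :=
  [set f | forall e : R, 0 < e -> exists h, S h /\ hnorm (f - h) < e].

Definition clspan (S : set H) : set H := hclosure (span S).

Definition closed_subspace (W : set H) : Prop :=
  [/\ W 0,
      (forall (a : R[i]) (x y : H), W x -> W y -> W (a *: x + y)) &
      hclosure W `<=` W].

Definition unitary (g : H -> H) : Prop :=
  [/\ linear_for *:%R g,
      (forall x y : H, ip (g x) (g y) = ip x y) &
      (forall y : H, exists x, g x = y)].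

Definition ctbl_inf_abelian_unitary_group (G : set (H -> H)) : Prop :=
  [/\ (forall g, G g -> unitary g),
      [/\ G id,
          (forall g h, G g -> G h -> G (g \o h)) &
          (forall g, G g -> exists h, G h /\ g \o h = id /\ h \o g = id)],
      (forall g h, G g -> G h -> g \o h = h \o g) &
      countable G /\ infinite_set G].

(* the indexed family G(S) = {g v_j : g in G, j < k}, indexed by pairs (g, j) *)
Definition orbit_index (G : set (H -> H)) (k : nat) : set ((H -> H) * 'I_k) :=
  [set p | G p.1].
Definition orbit_family (k : nat) (v : 'I_k -> H) (p : (H -> H) * 'I_k) : H :=
  p.1 (v p.2).

Definition frame_for (J : choiceType) (D : set J) (v : J -> H) (V : set H) : Prop :=
  V = clspan (v @` D) /\
  exists A B : R, [/\ 0 < A, A <= B &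
    forall f, V f ->
      ((A * hnorm f ^+ 2)%:E <= \esum_(j in D) (cnorm2 (ip f (v j)))%:E
       <= (B * hnorm f ^+ 2)%:E)%E].

End Hilbert.

Arguments orbit_index {R H} G k _.

(* Main.v *)
Require Import Defs.
From mathcomp Require Import all_boot all_order all_algebra.
From mathcomp Require Import all_classical all_reals all_analysis.
From mathcomp Require Import complex.
From mathcomp Require Import ring lra.
Import Order.TTheory GRing.Theory Num.Theory.
Local Open Scope ring_scope.
Local Open Scope classical_set_scope.
Set Implicit Arguments. Unset Strict Implicit. Unset Printing Implicit Defensive.

Section IP.
Variable R : realType.
Variable H : lmodType R[i].
Variable ip : H -> H -> R[i].
Hypothesis hip : is_inner_product ip.

Lemma conjE (a b : R) : ((a +i* b)%C : R[i])^* = (a +i* (-b))%C.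
Proof. reflexivity. Qed.

Lemma ipL a x y z : ip (a *: x + y) z = a * ip x z + ip y z.
Proof. by case: hip. Qed.
Lemma ip_sym x y : ip y x = (ip x y)^*.
Proof. by case: hip => _ h _ _; apply: h. Qed.
Lemma ip_ge0 x : 0 <= ip x x.
Proof. by case: hip. Qed.
Lemma ip_def x : ip x x = 0 -> x = 0.
Proof. by case: hip => _ _ _; apply. Qed.

Lemma ipDl x y z : ip (x + y) z = ip x z + ip y z.
Proof. by rewrite -[x]scale1r ipL mul1r scale1r. Qed.
Lemma ip0l z : ip 0 z = 0.
Proof.
have := ipDl 0 0 z; rewrite addr0 => /(congr1 (fun v => v - ip 0 z)).
by rewrite subrr addrK => <-.
Qed.
Lemma ipZl a x z : ip (a *: x) z = a * ip x z.
Proof. by rewrite -[a *: x]addr0 ipL ip0l addr0. Qed.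
Lemma ipNl x z : ip (- x) z = - ip x z.
Proof. by rewrite -scaleN1r ipZl mulN1r. Qed.
Lemma ipBl x y z : ip (x - y) z = ip x z - ip y z.
Proof. by rewrite ipDl ipNl. Qed.

Lemma conjD (a b : R[i]) : (a + b)^* = a^* + b^*.
Proof. by case: a; case: b => ? ? ? ?; rewrite !conjE; apply/eqP; rewrite eq_complex /= opprD !eqxx. Qed.
Lemma conjN (a : R[i]) : (- a)^* = - a^*.
Proof. by case: a => ? ?; rewrite !conjE. Qed.
Lemma conj0 : (0 : R[i])^* = 0.
Proof. by rewrite conjE oppr0. Qed.

Lemma ip0r z : ip z 0 = 0.
Proof. by rewrite ip_sym ip0l conj0. Qed.
Lemma ipDr x y z : ip z (x + y) = ip z x + ip z y.
Proof. by rewrite ip_sym ipDl conjD -!ip_sym. Qed.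
Lemma ipNr x z : ip z (- x) = - ip z x.
Proof. by rewrite ip_sym ipNl conjN -ip_sym. Qed.
Lemma ipBr x y z : ip z (x - y) = ip z x - ip z y.
Proof. by rewrite ipDr ipNr. Qed.

Definition q x := complex.Re (ip x x).
Lemma q_ge0 x : 0 <= q x.
Proof. by have := ip_ge0 x; rewrite /q; case: (ip x x) => a b; rewrite lecE /= => /andP[]. Qed.
Lemma Im_ipxx x : complex.Im (ip x x) = 0.
Proof. by have := ip_ge0 x; case: (ip x x) => a b; rewrite lecE /= => /andP[/eqP]. Qed.
Lemma hnorm_ge0 x : 0 <= hnorm ip x.
Proof. exact: sqrtr_ge0. Qed.
Lemma hnorm_sq x : hnorm ip x ^+ 2 = q x.
Proof. by rewrite /hnorm sqr_sqrtr // q_ge0. Qed.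
Lemma q_eq0 x : q x = 0 -> x = 0.
Proof.
move=> h; apply: ip_def; apply/eqP; rewrite eq_complex /=.
by move: h; rewrite /q => ->; rewrite Im_ipxx eqxx.
Qed.

Lemma Re_sym x y : complex.Re (ip y x) = complex.Re (ip x y).
Proof. by rewrite ip_sym; case: (ip x y). Qed.
Lemma Im_sym x y : complex.Im (ip y x) = - complex.Im (ip x y).
Proof. by rewrite ip_sym; case: (ip x y). Qed.

Lemma qD x y : q (x + y) = q x + q y + 2 * complex.Re (ip y x).
Proof.
rewrite /q ipDl !ipDr !raddfD /= (Re_sym y x).
by rewrite mulr2n mulrDl mul1r; lra.
Qed.

Lemma ReZl (t : R) x y : complex.Re (ip ((t%:C)%C *: x) y) = t * complex.Re (ip x y).
Proof. by rewrite ipZl; case: (ip x y) => a b /=; rewrite mul0r subr0. Qed.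

Lemma qZ (t : R) x : q ((t%:C)%C *: x) = t ^+ 2 * q x.
Proof.
rewrite /q ReZl ip_sym ipZl ip_sym.
by case: (ip x x) => a b /=; rewrite mul0r subr0 expr2 mulrA.
Qed.

Lemma qN x : q (- x) = q x.
Proof. by rewrite /q ipNl ipNr opprK. Qed.

Lemma parallelogram x y : q (x + y) + q (x - y) = 2 * q x + 2 * q y.
Proof. rewrite !qD qN ipNl raddfN /=; lra. Qed.

Lemma hnormN x : hnorm ip (- x) = hnorm ip x.
Proof. by rewrite /hnorm -/(q _) qN. Qed.
Lemma hnormB x y : hnorm ip (x - y) = hnorm ip (y - x).
Proof. by rewrite -hnormN opprB. Qed.

Lemma quad (a b c : R) : 0 <= a -> 0 <= b ->
  (forall t, 0 <= a + t ^+ 2 * b + 2 * t * c) -> c ^+ 2 <= a * b.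
Proof.
move=> ha hb h.
have [b0|b0] := eqVneq b 0.
  subst b; have [c0|cn0] := eqVneq c 0; first by rewrite c0 expr0n /= mulr0.
  have := h (- (a + 1) / (2 * c)); rewrite mulr0 addr0.
  have -> : 2 * (- (a + 1) / (2 * c)) * c = - (a + 1).
    by field.
  lra.
have bp : 0 < b by rewrite lt_neqAle eq_sym b0 hb.
have := h (- c / b).
have -> : a + (- c / b) ^+ 2 * b + 2 * (- c / b) * c = a - c ^+ 2 / b.
  by field; rewrite gt_eqF.
rewrite subr_ge0 ler_pdivrMr //.
Qed.

Lemma CS x y : complex.Re (ip x y) ^+ 2 <= q x * q y.
Proof.
apply: quad; rewrite ?q_ge0 // => t.
have := q_ge0 (x + (t%:C)%C *: y); rewrite qD qZ ReZl Re_sym.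
by rewrite mulrA.
Qed.

Lemma hnorm_triangle x y : hnorm ip (x + y) <= hnorm ip x + hnorm ip y.
Proof.
have h1 := hnorm_sq (x + y); have h2 := hnorm_sq x; have h3 := hnorm_sq y.
rewrite qD -h2 -h3 in h1; have := CS y x; rewrite -h2 -h3.
move: (hnorm_ge0 (x + y)) (hnorm_ge0 x) (hnorm_ge0 y) h1.
set c := complex.Re _; set a := hnorm ip x; set b := hnorm ip y; set d := hnorm ip _.
move=> hd ha hb h1 hc.
have hm : 0 <= a * b by apply: mulr_ge0.
have hc2 : c ^+ 2 <= (a * b) ^+ 2 by rewrite exprMn mulrC.
have hc' : c <= a * b.
  move: hm hc2; set m := a * b => hm hc2; nra.
have hd2 : d ^+ 2 <= (a + b) ^+ 2 by rewrite h1 sqrrD mulr2n; lra.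
have hab : 0 <= a + b by lra.
move: hab hd2; set m := a + b => hab hd2; nra.
Qed.

End IP.

Lemma inv_small (R : realType) (eta : R) : 0 < eta ->
  exists N : nat, forall n : nat, (N <= n)%N -> (n.+1%:R : R)^-1 < eta.
Proof.
move=> he; exists (Num.Def.archi_bound eta^-1) => n hn.
have hi : 0 <= eta^-1 by rewrite invr_ge0 ltW.
have h1 := archi_boundP hi.
have h2 : ((Num.Def.archi_bound eta^-1)%:R : R) <= n.+1%:R.
  by rewrite ler_nat; apply: leq_trans hn _.
rewrite invf_plt ?posrE ?ltr0Sn //.
exact: lt_le_trans h1 h2.
Qed.

Lemma sqr_le (R : realType) (x y : R) : 0 <= x -> x <= y -> x ^+ 2 <= y ^+ 2.
Proof. move=> h1 h2; nra. Qed.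

Section Proj.
Variable R : realType.
Variable H : lmodType R[i].
Variable ip : H -> H -> R[i].
Hypothesis hip : is_inner_product ip.
Hypothesis hcomp : is_complete ip.
Variable W : set H.
Hypothesis hW : closed_subspace ip W.

Lemma W0 : W 0. Proof. by case: hW. Qed.
Lemma WL a x y : W x -> W y -> W (a *: x + y). Proof. by case: hW => _ h _; apply: h. Qed.
Lemma WZ a x : W x -> W (a *: x). Proof. by move=> h; rewrite -[_ *: _]addr0; apply: WL => //; apply: W0. Qed.
Lemma WD x y : W x -> W y -> W (x + y). Proof. by move=> h1 h2; rewrite -[x]scale1r; apply: WL. Qed.
Lemma Wcl : hclosure ip W `<=` W. Proof. by case: hW. Qed.

Lemma proj_exists u : exists l, W l /\ forall w, W w -> ip (u - l) w = 0.
Proof.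
pose S := [set hnorm ip (u - w) | w in W].
have S0 : S !=set0 by exists (hnorm ip (u - 0)); exists 0 => //; apply: W0.
have Slb : lbound S 0 by move=> _ [w _ <-]; apply: hnorm_ge0.
have hlb : has_lbound S by exists 0.
pose d := inf S.
have d0 : 0 <= d := lb_le_inf S0 Slb.
have dlb : forall w, W w -> d <= hnorm ip (u - w).
  by move=> w hw; apply: (ge_inf hlb); exists w.
have : forall n : nat, exists w, W w /\ hnorm ip (u - w) < d + (n.+1%:R)^-1.
  move=> n; have [e [w hw <-] he] : exists2 e, S e & e < inf S + (n.+1%:R)^-1.
    by apply: inf_adherent; [rewrite invr_gt0 ltr0Sn | exact: (conj S0 hlb)].
  by exists w.
move=> /choice [ws hws].
have key : forall m n, q ip (ws m - ws n) <=
   2 * (d + (n.+1%:R)^-1) ^+ 2 + 2 * (d + (m.+1%:R)^-1) ^+ 2 - 4 * d ^+ 2.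
  move=> m n.
  have [Wn hn] := hws n; have [Wm hm] := hws m.
  pose a := u - ws n; pose b := u - ws m.
  pose mid := ((2 : R)^-1)%:C%C *: (ws n + ws m).
  have Wmid : W mid by apply: WZ; apply: WD.
  have hab : a + b = (2 : R)%:C%C *: (u - mid).
    rewrite /a /b /mid scalerBr scalerA -rmorphM /= mulfV ?pnatr_eq0 // scale1r.
    by rewrite rmorph_nat scaler_nat mulr2n opprD addrACA.
  have hamb : a - b = ws m - ws n.
    by rewrite /a /b opprB addrC addrA subrK.
  have par : q ip (a + b) + q ip (a - b) = 2 * q ip a + 2 * q ip b.
    exact: parallelogram.
  have hq1 : q ip (a + b) = 4 * q ip (u - mid).
    by rewrite hab qZ //; congr (_ * _); rewrite expr2 -natrM.
  have hq2 : d ^+ 2 <= q ip (u - mid).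
    by rewrite -hnorm_sq //; apply: sqr_le => //; apply: dlb.
  have ha : q ip a <= (d + (n.+1%:R)^-1) ^+ 2.
    by rewrite -hnorm_sq //; apply: sqr_le; [exact: hnorm_ge0 | exact: ltW].
  have hb : q ip b <= (d + (m.+1%:R)^-1) ^+ 2.
    by rewrite -hnorm_sq //; apply: sqr_le; [exact: hnorm_ge0 | exact: ltW].
  rewrite -hamb; move: par hq2 ha hb; rewrite hq1; move=> h1 h2 h3 h4; set A1 := q ip (a - b) in h1 *; set A2 := q ip (u - mid) in h1 h2; set A3 := q ip a in h1 h3; set A4 := q ip b in h1 h4; move: h1 h2 h3 h4; set al := (n.+1%:R : R)^-1; set be := (m.+1%:R : R)^-1; clearbody A1 A2 A3 A4 d al be; clear; move=> *; lra.
have cauchy : forall e, 0 < e -> exists N : nat, forall m n : nat,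
    (N <= m)%N -> (N <= n)%N -> hnorm ip (ws m - ws n) < e.
  move=> e e0.
  have e20 : 0 < e ^+ 2 by rewrite exprn_gt0.
  have den0 : 0 < 8 * d + 4 + e ^+ 2 by lra.
  pose eta := e ^+ 2 / (8 * d + 4 + e ^+ 2).
  have eta0 : 0 < eta by apply: divr_gt0.
  have eta1 : eta <= 1 by rewrite ler_pdivrMr // mul1r; lra.
  have etaE : (8 * d + 4) * eta < e ^+ 2.
    rewrite /eta mulrA ltr_pdivrMr // mulrC ltr_pM2l //; lra.
  have [N hN] := inv_small eta0.
  exists N => m n hm hn.
  have km := key m n; have an := hN n hn; have am := hN m hm.
  have an0 : 0 < (n.+1%:R : R)^-1 by rewrite invr_gt0 ltr0Sn.
  have am0 : 0 < (m.+1%:R : R)^-1 by rewrite invr_gt0 ltr0Sn.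
  have hq : q ip (ws m - ws n) < e ^+ 2.
    move: km an am an0 am0 etaE eta1 eta0 d0.
    set A := q ip _; set al := (n.+1%:R : R)^-1; set be := (m.+1%:R : R)^-1.
    clearbody A al be eta d; clear; move=> *; nra.
  have := hnorm_ge0 ip (ws m - ws n); rewrite -hnorm_sq // in hq.
  move: hq; set h := hnorm ip _; clearbody h; move=> *; nra.
have [l conv] := hcomp cauchy.
have Wl : W l.
  apply: Wcl => e e0; have [N hN] := conv e e0.
  exists (ws N); split; first by case: (hws N).
  by rewrite hnormB //; apply: hN.
have dl : hnorm ip (u - l) <= d.
  apply/ler_addgt0Pr => e e0.
  have e2 : 0 < e / 2 by rewrite divr_gt0.
  have [N1 h1] := conv _ e2; have [N2 h2] := inv_small e2.
  pose n := maxn N1 N2.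
  have t := hnorm_triangle hip (u - ws n) (ws n - l).
  rewrite addrA subrK in t.
  have := h1 n (leq_maxl _ _); have := h2 n (leq_maxr _ _); have := (hws n).2.
  move: t; set x1 := hnorm ip (u - l); set x2 := hnorm ip (u - ws n); set x3 := hnorm ip (ws n - l).
  set al := (n.+1%:R : R)^-1.
  clearbody x1 x2 x3 al d; clear; move=> *; lra.
have orth : forall w, W w -> complex.Re (ip w (u - l)) = 0.
  move=> w hw.
  have : complex.Re (ip w (u - l)) ^+ 2 <= 0 * q ip w.
    apply: quad; rewrite ?q_ge0 ?lexx // => t.
    have hm : W ((- (t%:C)%C) *: w + l) by apply: WL.
    have hle := dlb _ hm.
    have e : u - (- (t%:C)%C *: w + l) = (u - l) + (t%:C)%C *: w.
      by rewrite opprD scaleNr opprK addrCA addrC.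
    rewrite e in hle.
    have hsq : q ip (u - l) <= q ip (u - l + (t%:C)%C *: w).
      rewrite -!hnorm_sq //; apply: sqr_le; first exact: hnorm_ge0.
      exact: le_trans dl hle.
    rewrite (qD hip (u - l)) qZ // ReZl // in hsq.
    move: hsq; set A := q ip (u - l); set B := q ip w; set c := complex.Re _.
    clearbody A B c; clear; move=> *; lra.
  rewrite mul0r => h; apply/eqP; rewrite -sqrf_eq0 eq_le sqr_ge0 andbT //.
exists l; split => // w hw.
have r1 := orth w hw; have r2 := orth (('i%C : R[i]) *: w) (WZ _ hw).
rewrite ipZl // in r2.
rewrite ip_sym //; move: r1 r2; case: (ip w (u - l)) => a b /= -> r2.
apply/eqP; rewrite eq_complex /= eqxx /=; move: r2.
rewrite !mul0r !mul1r sub0r => /eqP; rewrite oppr_eq0 => /eqP ->.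
by [].
Qed.

End Proj.

Section Lin.
Variable R : realType.
Variable H : lmodType R[i].

Definition islin (f : H -> H) := forall a x y, f (a *: x + y) = a *: f x + f y.

Variable f : H -> H.
Hypothesis hf : islin f.

Lemma lin0 : f 0 = 0.
Proof.
have := hf (-1) 0 0; rewrite scaler0 addr0 scaleN1r addrC subrr.
by move=> h.
Qed.
Lemma linD x y : f (x + y) = f x + f y.
Proof. by have := hf 1 x y; rewrite !scale1r. Qed.
Lemma linZ a x : f (a *: x) = a *: f x.
Proof. by have := hf a x 0; rewrite !addr0 lin0 addr0. Qed.
Lemma linN x : f (- x) = - f x.
Proof. by rewrite -scaleN1r linZ scaleN1r. Qed.
Lemma linB x y : f (x - y) = f x - f y.
Proof. by rewrite linD linN. Qed.
Lemma lin_sum n (c : 'I_n -> R[i]) (v : 'I_n -> H) :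
  f (\sum_(k < n) c k *: v k) = \sum_(k < n) c k *: f (v k).
Proof.
elim: n c v => [|n IH] c v; first by rewrite !big_ord0 lin0.
by rewrite !big_ord_recr /= linD linZ IH.
Qed.
End Lin.

Section Proj2.
Variable R : realType.
Variable H : lmodType R[i].
Variable ip : H -> H -> R[i].
Hypothesis hip : is_inner_product ip.
Variable W : set H.
Hypothesis hW : closed_subspace ip W.
Variable P : H -> H.
Hypothesis hPW : forall u, W (P u).
Hypothesis hPo : forall u w, W w -> ip (u - P u) w = 0.

Lemma WB x y : W x -> W y -> W (x - y).
Proof. by move=> h1 h2; rewrite -scaleN1r addrC; apply: (WL hW). Qed.

Lemma proj_uniq u a : W a -> (forall w, W w -> ip (u - a) w = 0) -> a = P u.
Proof.
move=> Wa ha.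
have Wv : W (P u - a) by apply: WB.
have : ip (P u - a) (P u - a) = 0.
  have -> : P u - a = (u - a) - (u - P u).
    by rewrite opprB [in RHS]addrC [in RHS]addrA subrK.
  by rewrite ipBl // ha ?hPo ?subrr //; rewrite opprB addrC addrA subrK.
move=> /(ip_def hip) /eqP; rewrite subr_eq0 => /eqP ->.
by [].
Qed.

Lemma P_id w : W w -> P w = w.
Proof. by move=> hw; symmetry; apply: proj_uniq => // x _; rewrite subrr ip0l. Qed.

Lemma P_lin : islin P.
Proof.
move=> a x y; symmetry; apply: proj_uniq; first by apply: (WL hW).
move=> w hw.
have -> : a *: x + y - (a *: P x + P y) = a *: (x - P x) + (y - P y).
  by rewrite scalerBr opprD addrACA.
by rewrite ipL // !hPo // mulr0 addr0.
Qed.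

Lemma P_contr u : hnorm ip (P u) <= hnorm ip u.
Proof.
have e : q ip u = q ip (P u) + q ip (u - P u).
  have := qD hip (P u) (u - P u); rewrite addrC subrK => ->.
  by rewrite hPo // mulr0 addr0.
have h1 := hnorm_sq hip u; have h2 := hnorm_sq hip (P u).
have h3 := q_ge0 hip (u - P u).
have := hnorm_ge0 ip u; have := hnorm_ge0 ip (P u).
move: h1 h2 h3 e; set a := hnorm ip u; set b := hnorm ip (P u).
set A := q ip u; set B := q ip (P u); set C := q ip (u - P u).
clearbody a b A B C; clear; move=> *; nra.
Qed.

Lemma ip_P_r f v : W f -> ip f (P v) = ip f v.
Proof.
move=> hf; have : ip f (v - P v) = 0 by rewrite ip_sym // hPo // conj0.
by rewrite ipBr // => /eqP; rewrite subr_eq0 => /eqP ->.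
Qed.

Lemma P_comm (g h : H -> H) : islin g -> (forall x y, ip (g x) (g y) = ip x y) ->
  (forall w, W w -> W (g w)) -> (forall w, W w -> W (h w)) -> g \o h = id ->
  forall u, P (g u) = g (P u).
Proof.
move=> lg ipg Wg Wh gh u; symmetry; apply: proj_uniq; first by apply: Wg.
move=> w hw; rewrite -(linB lg).
have -> : w = g (h w) by have := congr1 (fun F => F w) gh.
by rewrite ipg hPo //; apply: Wh.
Qed.

End Proj2.

Lemma esum_ord (R : realType) n (a : 'I_n -> \bar R) : (forall k, (0 <= a k)%E) ->
  \esum_(k in [set: 'I_n]) a k = \sum_(k < n) a k.
Proof.
move=> a0; rewrite esum_fset; last by move=> *; apply: a0.
  have -> : [set: 'I_n] = [set` enum 'I_n].
    by apply/seteqP; split => k //= _; rewrite mem_enum.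
  by rewrite -fsbig_seq ?enum_uniq // big_enum.
exact: finite_finset.
Qed.

Lemma esum_orbit (R : realType) (H : lmodType R[i]) (G : set (H -> H)) n
  (v : 'I_n -> H) (F : H -> R) : (forall x, 0 <= F x) ->
  \esum_(i in orbit_index G n) (F (orbit_family v i))%:E =
  \esum_(g in G) \sum_(k < n) (F (g (v k)))%:E.
Proof.
move=> F0.
have -> : orbit_index G n = G `*`` (fun _ => [set: 'I_n]).
  by apply/seteqP; split => -[g k] /=; [move=> h; split | case].
transitivity (\esum_(g in G) \esum_(k in [set: 'I_n]) (F (g (v k)))%:E).
  rewrite (esum_esum (a := fun g k => (F (g (v k)))%:E)); last by move=> *; rewrite lee_fin.
  by apply: eq_esum => -[g k] _.
apply: eq_esum => g _; rewrite esum_ord // => k; by rewrite lee_fin.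
Qed.

Section Span.
Variable R : realType.
Variable H : lmodType R[i].
Variable ip : H -> H -> R[i].
Variable W : set H.
Hypothesis hW : closed_subspace ip W.

Lemma W_sum n (c : 'I_n -> R[i]) (v : 'I_n -> H) :
  (forall k, W (v k)) -> W (\sum_(k < n) c k *: v k).
Proof.
elim: n c v => [|n IH] c v hv; first by rewrite big_ord0; apply: (W0 hW).
rewrite big_ord_recr /= addrC; apply: (WL hW) => //; apply: IH => k; apply: hv.
Qed.

Lemma span_sub (S : set H) : S `<=` W -> Defs.span S `<=` W.
Proof. by move=> hS _ [n [c [v [hv ->]]]]; apply: W_sum => k; apply: hS. Qed.

Lemma hclosure_mono (A B : set H) : A `<=` B -> hclosure ip A `<=` hclosure ip B.
Proof. by move=> hAB f hf e e0; have [h [hA hh]] := hf e e0; exists h; split => //; apply: hAB. Qed.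

Lemma clspan_sub (S : set H) : S `<=` W -> clspan ip S `<=` W.
Proof.
move=> hS f hf; apply: (Wcl hW); apply: (hclosure_mono (span_sub hS)); exact: hf.
Qed.
End Span.

Unset Implicit Arguments.

Theorem theorem3p3 (R : realType) (H : lmodType R[i]) (ip : H -> H -> R[i])
  (hH : separable_hilbert_space ip)
  (G : set (H -> H)) (hG : ctbl_inf_abelian_unitary_group ip G)
  (r s : nat) (x : 'I_r -> H) (y : 'I_s -> H)
  (hx : injective x) (hy : injective y) (hrs : (r < s)%N)
  (V0 V1 W0 : set H)
  (hV0 : V0 = clspan ip (orbit_family x @` orbit_index G r))
  (hV1 : V1 = clspan ip (orbit_family y @` orbit_index G s))
  (hV01 : V0 `<=` V1)
  (hW0 : closed_subspace ip W0) (hW01 : W0 `<=` V1)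
  (hsum : [set v + w | v in V0 & w in W0] = V1)
  (hcap : V0 `&` W0 = [set 0])
  (hfX : frame_for ip (orbit_index G r) (orbit_family x) V0)
  (hfY : frame_for ip (orbit_index G s) (orbit_family y) V1) :
  (exists (p : nat) (z : 'I_p -> H),
      [/\ (0 < p)%N, injective z, (forall k, W0 (z k)) &
          frame_for ip (orbit_index G p) (orbit_family z) W0])
  <-> (forall g, G g -> forall w, W0 w -> W0 (g w)).
Proof.
case: hH => hip hcomp _.
case: hG => hunit [hid hGc hinv] _ _.
have glin : forall g, G g -> islin g.
  by move=> g hg; case: (hunit g hg) => lin _ _ a u v; apply: lin.
have gip : forall g, G g -> forall u v, ip (g u) (g v) = ip u v.
  by move=> g hg; case: (hunit g hg).
have gnorm : forall g, G g -> forall u, hnorm ip (g u) = hnorm ip u.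
  by move=> g hg u; rewrite /hnorm gip.
split.
  move=> [p [z [_ _ _ [E _]]]] g hg w.
  rewrite E => hw e e0.
  have [h [hs hh]] := hw e e0.
  case: hs => n [c [v [hv hE]]].
  exists (g h); split.
    rewrite hE (lin_sum (glin g hg)).
    exists n, c, (fun k => g (v k)); split => // k.
    case: (hv k) => -[g' j] hg' <-.
    by exists (g \o g', j) => //=; apply: hGc.
  by rewrite -(linB (glin g hg)) gnorm.
move=> inv.
have := proj_exists hip hcomp hW0; move=> /choice [P hP].
have hPW : forall u, W0 (P u) by move=> u; case: (hP u).
have hPo : forall u w, W0 w -> ip (u - P u) w = 0 by move=> u; case: (hP u).
have Pcomm : forall g, G g -> forall u, P (g u) = g (P u).
  move=> g hg; have [h [hh [gh _]]] := hinv g hg.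
  apply: (P_comm hip hW0 hPW hPo (glin g hg) (gip g hg) (inv g hg) (inv h hh) gh).
pose y' := fun j => P (y j).
pose D : {set 'I_s} := finset (fun j : 'I_s => [forall j' : 'I_s, (j' < j)%N ==> (y' j' != y' j)]).
pose p := #|D|.
pose z := fun k : 'I_p => y' (enum_val k).
pose psi := fun j : 'I_s => [arg min_(j' < j | y' j' == y' j) (j' : nat)].
have psiP : forall j, y' (psi j) = y' j /\ psi j \in D.
  move=> j; rewrite /psi; case: arg_minnP => [|i /eqP hi hmin]; first exact: eqxx.
  split => //; rewrite inE; apply/forallP => j'; apply/implyP => hlt.
  apply/negP => /eqP e.
  have := hmin j'; rewrite e hi eqxx => /(_ isT).
  by rewrite leqNgt hlt.
have zinj : injective z.
  move=> a b; rewrite /z => e; apply: enum_val_inj.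
  have Da := enum_valP a; have Db := enum_valP b.
  rewrite !inE in Da Db.
  case: (ltngtP (enum_val a) (enum_val b)) => hab.
  - by move/forallP: Db => /(_ (enum_val a)); rewrite hab e eqxx.
  - by move/forallP: Da => /(_ (enum_val b)); rewrite hab e eqxx.
  - exact: val_inj.
have ppos : (0 < p)%N.
  have j0 : 'I_s := Ordinal (leq_ltn_trans (leq0n r) hrs).
  by apply/card_gt0P; exists (psi j0); case: (psiP j0).
have zW : forall k, W0 (z k) by move=> k; apply: hPW.
have psiD : forall j, psi j \in D by move=> j; case: (psiP j).
have zpsi : forall j, z (enum_rank_in (psiD j) (psi j)) = y' j.
  by move=> j; rewrite /z enum_rankK_in ?psiD //; case: (psiP j).
case: hfY => hY [A [B [A0 AB hAB]]].
exists p, z; split => //; split.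
  apply/seteqP; split; last first.
    by apply: (clspan_sub hW0) => _ [[g k] hg <-]; apply: inv => //; apply: zW.
  move=> w hw e e0.
  have V1w := hW01 _ hw; rewrite hY in V1w.
  have [h [hs hh]] := V1w e e0.
  case: hs => n [c [v [hv hE]]].
  exists (P h); split.
    rewrite hE (lin_sum (P_lin hip hW0 hPW hPo)).
    exists n, c, (fun k => P (v k)); split => // k.
    case: (hv k) => -[g j] hg <-.
    exists (g, enum_rank_in (psiD j) (psi j)) => //=.
    by rewrite zpsi Pcomm.
  rewrite -{1}(P_id hip hW0 hPW hPo hw) -(linB (P_lin hip hW0 hPW hPo)).
  exact: le_lt_trans (P_contr hip hPW hPo _) hh.
have s0 : (0 < s)%N by apply: leq_ltn_trans hrs.
have sR : (0 : R) < s%:R by rewrite ltr0n.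
exists (A / s%:R), B; split; first by rewrite divr_gt0.
  by apply: le_trans AB; rewrite ler_pdivrMr // ler_peMr ?(ltW A0) // ler1n.
move=> f hf.
have /andP[lo up] := hAB f (hW01 _ hf).
pose F := fun v => cnorm2 (ip f v).
have F0 : forall v, 0 <= F v by move=> v; rewrite /F /cnorm2 addr_ge0 // sqr_ge0.
rewrite (esum_orbit G y F0) in lo up.
rewrite (esum_orbit G z F0).
have Fy : forall g, G g -> forall j, F (g (y' j)) = F (g (y j)).
  by move=> g hg j; rewrite /F /y' -Pcomm // (ip_P_r hip hPo) //; apply: hPW.
pose Sy := \esum_(g in G) \sum_(j < s) (F (g (y' j)))%:E.
pose Dg := fun g => \sum_(k < p) (F (g (z k)))%:E.
pose Sz := \esum_(g in G) Dg g.
have Ey : \esum_(g in G) \sum_(j < s) (F (g (y j)))%:E = Sy.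
  by apply: eq_esum => g hg; apply: eq_bigr => j _; rewrite Fy.
rewrite Ey in lo up.
have DgE : forall g0, Dg g0 = \sum_(j in D) (F (g0 (y' j)))%:E.
  by move=> g0; rewrite big_enum_val.
have le1 : (Sz <= Sy)%E.
  apply: le_esum => g hg; rewrite DgE.
  apply: lee_sum_nneg_subset => //= j _; by rewrite lee_fin; apply: F0.
have le2 : (Sy <= Sz *+ s)%E.
  apply: (@le_trans _ _ (\esum_(g in G) \sum_(j < s) Dg g)).
    apply: le_esum => g hg; apply: lee_sum => j _.
    rewrite DgE (bigD1 (psi j)) ?psiD //= (proj1 (psiP j)).
    apply: leeDl; apply: sume_ge0 => i _; by rewrite lee_fin; apply: F0.
  rewrite esum_sum; last by move=> g j _ _; apply: sume_ge0 => i _; by rewrite lee_fin; apply: F0.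
  by rewrite sumr_const card_ord.
have Sz0 : (0 <= Sz)%E.
  by apply: esum_ge0 => g _; apply: sume_ge0 => i _; by rewrite lee_fin; apply: F0.
have hup : (Sz <= (B * hnorm ip f ^+ 2)%:E)%E := le_trans le1 up.
have hlo : ((A * hnorm ip f ^+ 2)%:E <= Sz *+ s)%E := le_trans lo le2.
rewrite -/Sz; move: hup hlo Sz0; clear le1 le2; move: Sz => [X| |] //= hup hlo _.
rewrite hup andbT -EFin_natmul !lee_fin in hlo *.
rewrite -mulr_natr in hlo.
rewrite mulrAC ler_pdivrMr //.
Qed.
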